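(* Let $L=\langle S,A,\to\rangle$ be a labelled transition system. For all $x,y\in\{o,b\}$ and $s,t\in S$, if $s\mathrel{\underline{\leftrightarrow}}^{ed}_{(x,y)}t$ then $s\equiv^{ed}_{E(x,y)}t$.
   Context: An LTS is $\langle S,A,\to\rangle$ with states $S$, actions $A$ containing the internal action $\tau$, and $\to\subseteq S\times A\times S$; write $s\xrightarrow{a}t$, $\twoheadrightarrow$ for the reflexive-transitive and $\twoheadrightarrow^+$ for the transitive closure of $\xrightarrow{\tau}$. For $R\subseteq S\times S$ and $s,s',t$: $s\twoheadrightarrow_{o,R,t}s'$ iff $s\twoheadrightarrow s'$; $s\twoheadrightarrow_{b,R,t}s'$ iff $s\twoheadrightarrow s'$, $t\,R\,s$ and $t\,R\,s'$. For $x,y\in\{o,b\}$, a symmetric $R$ is an $(x,y)$-generic bisimulation if whenever $s\,R\,t$ and $s\xrightarrow{a}s'$, either $a=\tau$ and $s'\,R\,t$, or there exist $t',t_1,t_2$ with $t\twoheadrightarrow_{x,R,s}t_1\xrightarrow{a}t_2\twoheadrightarrow_{y,R,s'}t'$ and $s'\,R\,t'$. It is an $(x,y)$-generic bisimulation with explicit divergence if moreover for all $s\,R\,t$, if there is an infinite sequence $s=s_0\xrightarrow{\tau}s_1\xrightarrow{\tau}\cdots$, then there exist $t'$ with $t\twoheadrightarrow^+t'$ and some $k$ with $s_k\,R\,t'$. $s\mathrel{\underline{\leftrightarrow}}^{ed}_{(x,y)}t$ iff some such relation relates $s$ and $t$. Game with explicit divergence. Let $\frown,\smile$ be formal tags and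 $E\subseteq\{\frown,\smile\}$. Spoiler-owned configurations $\langle (s,t),c,m,r\rangle_S$ and Duplicator-owned $\langle (s,t),c,m,r\rangle_D$ have $(s,t)\in S\times S$, $c\in (A\times S)\cup\{\dagger\}$, $m\in (S\times\{\frown,\smile\})\cup\{\dagger\}$, $r\in\{*,\checkmark\}$. From $\langle (s,t),c,m,r\rangle_S$ Spoiler may: (S1) move to $\langle (s,t),c,m,*\rangle_D$ if $c\neq\dagger$; (S2a) for some $s\xrightarrow{a}s'$, move to $\langle (s,t),(a,s'),(t,\frown),*\rangle_D$ if $c=\dagger$; (S2b) for some $s\xrightarrow{a}s'$, move to $\langle (s,t),(a,s'),(t,\frown),\checkmark\rangle_D$ if $c\neq (a,s')$; (S3) for some $t\xrightarrow{a}t'$, move to $\langle (t,s),(a,t'),(s,\frown),\checkmark\rangle_D$. From $\langle (u,v),(a,u'),(\bar v,f),r\rangle_D$ Duplicator may: (D1) move to $\langle (u',\bar v),\dagger,\dagger,*\rangle_S$ if $a=\tau$; (D2) if $f=\frown$ and $\bar v\xrightarrow{a}v'$: (a) move to $\langle (u',v'),(a,u'),(v',\smile),*\rangle_S$, or (b) move to $\langle (u',v'),\dagger,\dagger,\checkmark\rangle_S$, or (c) only if $\smile\in E$, move to $\langle (u,v),(a,u'),(v',\smile),*\rangle_S$; (D3) for some $\bar v\xrightarrow{\tau}v'$: (a) move to $\langle (u,v'),(a,u'),(v',f),*\rangle_S$, or (b) only if $f=\smile$, move to $\langle (u',v'),\dagger,\dagger,\checkmark\rangle_S$, or (c) only if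 $f\in E$, move to $\langle (u,v),(a,u'),(v',f),*\rangle_S$. Duplicator wins a finite play if Spoiler gets stuck, and an infinite play if it has infinitely many $\checkmark$ rewards; other plays are won by Spoiler. $s\equiv^{ed}_E t$ iff Duplicator has a strategy winning all plays from $\langle (s,t),\dagger,\dagger,*\rangle_S$. $E(x,y)$ is the smallest set with $\frown\in E(o,y)$ and $\smile\in E(x,o)$ for all $x,y\in\{o,b\}$. *)

(* Defs.v *)
From Stdlib Require Import List.

Record LTS := mkLTS {
  St : Type;
  Act : Type;
  tau : Act;
  trans : St -> Act -> St -> Prop
}.

Inductive taus (L : LTS) : St L -> St L -> Prop :=
| taus_refl s : taus L s s
| taus_step s s' t : trans L s (tau L) s' -> taus L s' t -> taus L s t.

Definition taus_plus (L : LTS) (s t : St L) : Prop :=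
  exists s', trans L s (tau L) s' /\ taus L s' t.

Inductive mode := mo | mb.

Definition arr (L : LTS) (m : mode) (R : St L -> St L -> Prop) (t s s' : St L) : Prop :=
  match m with
  | mo => taus L s s'
  | mb => taus L s s' /\ R t s /\ R t s'
  end.

Definition symmetric_rel (X : Type) (R : X -> X -> Prop) : Prop :=
  forall a b, R a b -> R b a.

Definition generic_bisim (L : LTS) (x y : mode) (R : St L -> St L -> Prop) : Prop :=
  symmetric_rel (St L) R /\
  forall (s t s' : St L) (a : Act L), R s t -> trans L s a s' ->
    (a = tau L /\ R s' t) \/
    exists t' t1 t2, arr L x R s t t1 /\ trans L t1 a t2 /\ arr L y R s' t2 t' /\ R s' t'.

Definition explicit_divergence (L : LTS) (R : St L -> St L -> Prop) : Prop :=
  forall (s t : St L), R s t ->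
  forall (f : nat -> St L), f 0 = s -> (forall i, trans L (f i) (tau L) (f (S i))) ->
    exists t' k, taus_plus L t t' /\ R (f k) t'.

Definition generic_bisim_ed (L : LTS) (x y : mode) (R : St L -> St L -> Prop) : Prop :=
  generic_bisim L x y R /\ explicit_divergence L R.

Definition bisim_ed (L : LTS) (x y : mode) (s t : St L) : Prop :=
  exists R, generic_bisim_ed L x y R /\ R s t.

Inductive tag := Frown | Smile.
Inductive owner := Spoiler | Duplicator.

(* cfg: None encodes the dagger; reward false = *, true = checkmark *)
Record config (L : LTS) := mkCfg {
  cown : owner;
  cpos : St L * St L;
  cch  : option (Act L * St L);
  cmem : option (St L * tag);
  crew : bool
}.
Arguments mkCfg {L}.
Arguments cown {L}. Arguments cpos {L}. Arguments cch {L}.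
Arguments cmem {L}. Arguments crew {L}.

Inductive move (L : LTS) (E : tag -> Prop) : config L -> config L -> Prop :=
| mS1 s t c m r :
    c <> None ->
    move L E (mkCfg Spoiler (s,t) c m r) (mkCfg Duplicator (s,t) c m false)
| mS2a s t m r a s' :
    trans L s a s' ->
    move L E (mkCfg Spoiler (s,t) None m r)
             (mkCfg Duplicator (s,t) (Some (a,s')) (Some (t,Frown)) false)
| mS2b s t c m r a s' :
    trans L s a s' -> c <> Some (a,s') ->
    move L E (mkCfg Spoiler (s,t) c m r)
             (mkCfg Duplicator (s,t) (Some (a,s')) (Some (t,Frown)) true)
| mS3 s t c m r a t' :
    trans L t a t' ->
    move L E (mkCfg Spoiler (s,t) c m r)
             (mkCfg Duplicator (t,s) (Some (a,t')) (Some (s,Frown)) true)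
| mD1 u v a u' vb f r :
    a = tau L ->
    move L E (mkCfg Duplicator (u,v) (Some (a,u')) (Some (vb,f)) r)
             (mkCfg Spoiler (u',vb) None None false)
| mD2a u v a u' vb r v' :
    trans L vb a v' ->
    move L E (mkCfg Duplicator (u,v) (Some (a,u')) (Some (vb,Frown)) r)
             (mkCfg Spoiler (u',v') (Some (a,u')) (Some (v',Smile)) false)
| mD2b u v a u' vb r v' :
    trans L vb a v' ->
    move L E (mkCfg Duplicator (u,v) (Some (a,u')) (Some (vb,Frown)) r)
             (mkCfg Spoiler (u',v') None None true)
| mD2c u v a u' vb r v' :
    trans L vb a v' -> E Smile ->
    move L E (mkCfg Duplicator (u,v) (Some (a,u')) (Some (vb,Frown)) r)
             (mkCfg Spoiler (u,v) (Some (a,u')) (Some (v',Smile)) false)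
| mD3a u v a u' vb f r v' :
    trans L vb (tau L) v' ->
    move L E (mkCfg Duplicator (u,v) (Some (a,u')) (Some (vb,f)) r)
             (mkCfg Spoiler (u,v') (Some (a,u')) (Some (v',f)) false)
| mD3b u v a u' vb r v' :
    trans L vb (tau L) v' ->
    move L E (mkCfg Duplicator (u,v) (Some (a,u')) (Some (vb,Smile)) r)
             (mkCfg Spoiler (u',v') None None true)
| mD3c u v a u' vb f r v' :
    trans L vb (tau L) v' -> E f ->
    move L E (mkCfg Duplicator (u,v) (Some (a,u')) (Some (vb,f)) r)
             (mkCfg Spoiler (u,v) (Some (a,u')) (Some (v',f)) false).

(* A Duplicator strategy maps the history (p 0, ..., p n), whose last
   configuration is Duplicator-owned, to the next configuration. *)
Definition strategy (L : LTS) := list (config L) -> config L.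

Definition history (L : LTS) (p : nat -> config L) (n : nat) : list (config L) :=
  map p (seq 0 (S n)).

Definition consistent_prefix (L : LTS) (E : tag -> Prop) (sigma : strategy L)
    (c0 : config L) (p : nat -> config L) (n : nat) : Prop :=
  p 0 = c0 /\
  forall i, i < n ->
    move L E (p i) (p (S i)) /\
    (cown (p i) = Duplicator -> p (S i) = sigma (history L p i)).

(* sigma wins all plays from c0:
   - Duplicator is never stuck (sigma always prescribes a legal move), so every
     finite maximal play ends with Spoiler stuck (won by Duplicator);
   - every infinite consistent play has infinitely many checkmark rewards. *)
Definition winning_strategy (L : LTS) (E : tag -> Prop) (sigma : strategy L)
    (c0 : config L) : Prop :=
  (forall p n, consistent_prefix L E sigma c0 p n -> cown (p n) = Duplicator ->
     move L E (p n) (sigma (history L p n))) /\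
  (forall p, (forall n, consistent_prefix L E sigma c0 p n) ->
     forall N, exists k, N <= k /\ crew (p k) = true).

Definition game_equiv (L : LTS) (E : tag -> Prop) (s t : St L) : Prop :=
  exists sigma, winning_strategy L E sigma (mkCfg Spoiler (s,t) None None false).

Definition Exy (x y : mode) (f : tag) : Prop :=
  match f with
  | Frown => x = mo
  | Smile => y = mo
  end.

(* Main.v *)
Require Import Defs.
From Stdlib Require Import List Arith Lia ClassicalEpsilon Classical.

Section Q.
Variable L : LTS.
Variables x y : mode.
Variable R : St L -> St L -> Prop.
Hypothesis HR : generic_bisim_ed L x y R.

Inductive Q : St L -> St L -> Prop :=
| Qbase s t : R s t -> Q s t
| Qsym s t : Q s t -> Q t s
| Qtr s r t : Q s r -> Q r t -> Q s t
| Qsand p z u z' : Q p z -> Q p z' -> taus L z u -> taus L u z' -> Q p u.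

Lemma taus_trans a b c : taus L a b -> taus L b c -> taus L a c.
Proof. induction 1; intros; auto. eapply taus_step; eauto. Qed.

Lemma taus_one a b : trans L a (tau L) b -> taus L a b.
Proof. intros; eapply taus_step; eauto; constructor. Qed.

Lemma taus_snoc a c b : taus L a c -> trans L c (tau L) b -> taus L a b.
Proof. intros; eapply taus_trans; eauto using taus_one. Qed.

Lemma taus_last a b : taus L a b -> a = b \/ exists c, taus L a c /\ trans L c (tau L) b.
Proof.
  induction 1 as [s|s s' t H1 H2 IH]; auto.
  right. destruct IH as [<-|[c [Hc1 Hc2]]].
  - exists s; split; auto; constructor.
  - exists c; split; auto; eapply taus_step; eauto.
Qed.

Lemma Qrefl s t : Q s t -> Q s s.
Proof. intros; eapply Qtr; eauto using Qsym. Qed.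

Lemma Qsand' p z u z' : Q p z -> Q p z' -> taus L z u -> taus L u z' -> Q u p.
Proof. intros; apply Qsym; apply (Qsand p z u z'); auto. Qed.

Definition cx u v := x = mb -> Q u v.
Definition cy u v := y = mb -> Q u v.

Definition T s t := forall s1 a s2 s', taus L s s1 -> trans L s1 a s2 -> taus L s2 s' ->
 (exists t1 t2 t', taus L t t1 /\ trans L t1 a t2 /\ taus L t2 t' /\ cx s1 t1 /\ cy s2 t2 /\ Q s' t') \/
 (a = tau L /\ exists t1 t', taus L t t1 /\ taus L t1 t' /\ cx s1 t1 /\ cy s2 t1 /\ Q s' t').

Lemma arr_taus m S a b c : arr L m S a b c -> taus L b c.
Proof. destruct m; simpl; tauto. Qed.

Lemma simR s t s1 : R s t -> taus L s s1 -> exists t1, taus L t t1 /\ R s1 t1.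
Proof.
  destruct HR as [[Hs Htr] Hed].
  intros H1 H2; revert t H1; induction H2 as [s|s s' u H3 H4 IH]; intros t H1.
  - exists t; split; auto; constructor.
  - destruct (Htr _ _ _ _ H1 H3) as [[_ H5]|[t' [t1 [t2 [H5 [H6 [H7 H8]]]]]]].
    + apply IH; auto.
    + destruct (IH _ H8) as [t3 [H9 H10]]. exists t3; split; auto.
      eapply taus_trans. apply (arr_taus _ _ _ _ _ H5).
      eapply taus_step; eauto. eapply taus_trans; eauto. apply (arr_taus _ _ _ _ _ H7).
Qed.

Lemma T_base s t : R s t -> T s t.
Proof.
  pose proof HR as [[Hs Htr] Hed].
  intros H s1 a s2 s' Hp Ha Hq.
  destruct (simR _ _ _ H Hp) as [t1 [Ht1 Hr1]].
  destruct (Htr _ _ _ _ Hr1 Ha) as [[Hat Hr2]|[u' [u1 [u2 [H5 [H6 [H7 H8]]]]]]].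
  - right; split; auto.
    destruct (simR _ _ _ Hr2 Hq) as [t' [Ht' Hr']].
    exists t1, t'; unfold cx, cy; repeat split; auto; try intros _; apply Qbase; auto.
  - left. destruct (simR _ _ _ H8 Hq) as [t' [Ht' Hr']].
    exists u1, u2, t'. repeat split; auto.
    + eapply taus_trans; eauto. apply (arr_taus _ _ _ _ _ H5).
    + eapply taus_trans; eauto. apply (arr_taus _ _ _ _ _ H7).
    + intros E; rewrite E in H5; simpl in H5; apply Qbase; tauto.
    + intros E; rewrite E in H7; simpl in H7; apply Qbase; tauto.
    + apply Qbase; auto.
Qed.

Lemma P1 r z r' : T r z -> Q r z -> taus L r r' -> exists z', taus L z z' /\ Q r' z'.
Proof.
  intros HT HQ Hp. destruct (taus_last _ _ Hp) as [<-|[rl [H1 H2]]].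
  - exists z; split; auto; constructor.
  - destruct (HT rl (tau L) r' r' H1 H2 (taus_refl _ _)) as
      [[z1 [z2 [z' [? [? [? [? [? ?]]]]]]]]|[_ [z1 [z' [? [? [? [? ?]]]]]]]].
    + exists z'; split; auto. eapply taus_trans; eauto. eapply taus_step; eauto.
    + exists z'; split; auto. eapply taus_trans; eauto.
Qed.

Lemma mode_cases (m : mode) : m = mo \/ m = mb.
Proof. destruct m; auto. Qed.

Lemma T_comp p r z : Q p r -> Q r z -> T p r -> T r z -> T p z.
Proof.
  intros Qpr Qrz Tpr Trz s1 a s2 s' Hp Ha Hq.
  destruct (Tpr s1 a s2 s' Hp Ha Hq) as
      [[r1 [r2 [r' [Hr1 [Hra [Hr2 [Cx [Cy Qr]]]]]]]]|[Hat [r1 [r' [Hr1 [Hr2 [Cx [Cy Qr]]]]]]]].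
  - destruct (Trz r1 a r2 r' Hr1 Hra Hr2) as
      [[z1 [z2 [z' [Hz1 [Hza [Hz2 [Cx' [Cy' Qz]]]]]]]]|[Hat [z1 [z' [Hz1 [Hz2 [Cx' [Cy' Qz]]]]]]]].
    + left. exists z1, z2, z'. repeat split; auto.
      * intros E; eapply Qtr; eauto.
      * intros E; eapply Qtr; eauto.
      * eapply Qtr; eauto.
    + right. split; auto. exists z1, z'. repeat split; auto.
      * intros E; eapply Qtr; eauto.
      * intros E; eapply Qtr; eauto.
      * eapply Qtr; eauto.
  - right; split; auto.
    destruct (mode_cases x) as [Ex|Ex].
    + destruct (mode_cases y) as [Ey|Ey].
      * destruct (P1 r z r' Trz Qrz (taus_trans _ _ _ Hr1 Hr2)) as [z' [Hz Qz]].
        exists z, z'; repeat split; auto; try apply taus_refl;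
          try (intros E; rewrite Ex in E; discriminate);
          try (intros E; rewrite Ey in E; discriminate).
        eapply Qtr; eauto.
      * assert (Q s2 r1) by (apply Cy; auto).
        destruct (taus_last _ _ Hr1) as [<-|[rl [H1 H2]]].
        -- destruct (P1 r z r' Trz Qrz Hr2) as [z' [Hz Qz]].
           exists z, z'; repeat split; auto; try apply taus_refl;
             try (intros E; rewrite Ex in E; discriminate).
           intros _; eapply Qtr; eauto.
           eapply Qtr; eauto.
        -- destruct (Trz rl (tau L) r1 r' H1 H2 Hr2) as
               [[z1 [z2 [z' [Hz1 [Hza [Hz2 [Cx' [Cy' Qz]]]]]]]]|[_ [z1 [z' [Hz1 [Hz2 [Cx' [Cy' Qz]]]]]]]].
           ++ exists z2, z'; repeat split; auto.
              eapply taus_snoc; eauto.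
              intros E; rewrite Ex in E; discriminate.
              intros _; eapply Qtr; eauto.
              eapply Qtr; eauto.
           ++ exists z1, z'; repeat split; auto.
              intros E; rewrite Ex in E; discriminate.
              intros _; eapply Qtr; eauto.
              eapply Qtr; eauto.
    + assert (Q s1 r1) by (apply Cx; auto).
      inversion Hr2 as [r0 Er0|r0 r1p r0' H1 H2 Er0]; subst.
      * destruct (P1 r z r' Trz Qrz Hr1) as [z' [Hz Qz]].
        exists z', z'; repeat split; auto; try apply taus_refl.
        intros _; eapply Qtr; eauto.
        intros Ey; eapply Qtr; eauto.
        eapply Qtr; eauto.
      * destruct (Trz r1 (tau L) r1p r' Hr1 H1 H2) as
               [[z1 [z2 [z' [Hz1 [Hza [Hz2 [Cx' [Cy' Qz]]]]]]]]|[_ [z1 [z' [Hz1 [Hz2 [Cx' [Cy' Qz]]]]]]]].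
        -- exists z1, z'; repeat split; auto.
           eapply taus_step; eauto.
           intros _; eapply Qtr; eauto.
           intros Ey; eapply Qtr; eauto.
           eapply Qtr; eauto.
        -- exists z1, z'; repeat split; auto.
           intros _; eapply Qtr; eauto.
           intros Ey; eapply Qtr; eauto.
           eapply Qtr; eauto.
Qed.

Lemma T_prefix p u z' : taus L u z' -> T p z' -> T p u.
Proof.
  intros Hu HT s1 a s2 s' Hp Ha Hq.
  destruct (HT s1 a s2 s' Hp Ha Hq) as
      [[z1 [z2 [z'' [? [? [? [? [? ?]]]]]]]]|[? [z1 [z'' [? [? [? [? ?]]]]]]]].
  - left; exists z1, z2, z''; repeat split; auto; eapply taus_trans; eauto.
  - right; split; auto; exists z1, z''; repeat split; auto; eapply taus_trans; eauto.
Qed.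

Lemma T_suffix z u p : taus L z u -> T z p -> T u p.
Proof.
  intros Hu HT s1 a s2 s' Hp Ha Hq. apply (HT s1 a s2 s'); auto. eapply taus_trans; eauto.
Qed.

Lemma Q_T s t : Q s t -> T s t /\ T t s.
Proof.
  pose proof HR as [[Hs Htr] Hed].
  induction 1 as [s t H|s t H [IH1 IH2]|s r t H1 [IH1 IH2] H2 [IH3 IH4]|p z u z' H1 [IH1 IH2] H2 [IH3 IH4] H3 H4].
  - split; apply T_base; auto.
  - split; auto.
  - split; eapply T_comp; eauto using Qsym.
  - split.
    + eapply T_prefix; eauto.
    + eapply T_suffix; eauto.
Qed.

Definition GA u a u' v := exists v1 v2 v', taus L v v1 /\ trans L v1 a v2 /\ taus L v2 v' /\
  cx u v1 /\ cy u' v2 /\ Q u' v'.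

Lemma Q_GA u v a u' : Q u v -> trans L u a u' -> (a = tau L /\ Q u' v) \/ GA u a u' v.
Proof.
  intros HQ Ha. destruct (Q_T _ _ HQ) as [HT _].
  destruct (HT u a u' u' (taus_refl _ _) Ha (taus_refl _ _)) as
      [[v1 [v2 [v' [? [? [? [? [? ?]]]]]]]]|[Hat [t1 [t' [Ht1 [Ht2 [Cx [Cy Qt]]]]]]]].
  - right; exists v1, v2, v'; repeat split; auto.
  - inversion Ht2 as [t0 Et0|t0 t1p t0' H1 H2 Et0]; subst.
    + destruct (taus_last _ _ Ht1) as [<-|[vl [H1 H2]]].
      * left; auto.
      * right. exists vl, t', t'; repeat split; auto; try apply taus_refl.
        intros E. apply (Qsand u v vl t'); auto. apply taus_one; auto.
    + right. exists t1, t1p, t'. repeat split; auto.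
      intros E. apply (Qsand u' t1 t1p t'); auto. apply taus_one; auto.
Qed.

Definition InfC s := exists f : nat -> St L, f 0 = s /\ (forall i, trans L (f i) (tau L) (f (S i))) /\
  forall i, Q (f i) s.

Lemma InfC_prepend a b : taus L a b -> (forall w, taus L a w -> taus L w b -> Q w a) ->
  InfC b -> Q b a -> InfC a.
Proof.
  induction 1 as [s|s s1 t H1 H2 IH]; intros Hw Hinf Hba; auto.
  assert (Qs1 : Q s1 s) by (apply Hw; auto; apply taus_one; auto).
  destruct IH as [f [Hf0 [Hf1 Hf2]]].
  - intros w Hw1 Hw2. eapply Qtr. apply Hw; auto. eapply taus_step; eauto. apply Qsym; auto.
  - auto.
  - eapply Qtr; eauto. apply Qsym; auto.
  - exists (fun i => match i with 0 => s | S j => f j end). repeat split; auto.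
    + intros [|i]; simpl; auto. rewrite Hf0; auto.
    + intros [|i]; simpl. apply (Qrefl s s1); apply Qsym; auto. apply (Qtr _ s1); auto.
Qed.

Lemma InfC_base s t : R s t -> InfC s -> InfC t.
Proof.
  pose proof HR as [[Hs Htr] Hed].
  intros Hst Hinf.
  set (G v := exists u, R u v /\ InfC u /\ Q v t).
  set (G' v := exists v', taus L v v' /\ G v' /\ Q v t).
  assert (HG : forall v, G v -> exists v', taus_plus L v v' /\ G v').
  { intros v [u [Huv [[h [Hh0 [Hh1 Hh2]]] Hvt]]].
    destruct (Hed u v Huv h Hh0 Hh1) as [v' [k [Hp Hr]]].
    exists v'; split; auto. exists (h k); repeat split; auto.
    - exists (fun i => h (k + i)). repeat split.
      + f_equal; lia.
      + intros i. replace (k + S i) with (S (k + i)) by lia. auto.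
      + intros i. eapply Qtr. apply Hh2. apply Qsym; apply Hh2.
    - apply (Qtr _ (h k)). apply Qsym. apply Qbase; eauto.
      apply (Qtr _ u). apply Hh2. apply (Qtr _ v); auto. apply Qbase; auto. }
  assert (HG' : forall v, G' v -> exists v1, trans L v (tau L) v1 /\ G' v1).
  { intros v [v' [Hvv' [Gv' Qvt]]].
    assert (Qv't : Q v' t) by (destruct Gv' as [? [? [? ?]]]; auto).
    inversion Hvv' as [v0 Ev0|v0 v1 v0' H1 H2 Ev0]; subst.
    - destruct (HG _ Gv') as [v'' [[v1 [H1 H2]] Gv'']].
      assert (Qv''t : Q v'' t) by (destruct Gv'' as [? [? [? ?]]]; auto).
      exists v1; split; auto. exists v''; repeat split; auto.
      eapply Qsand'. apply Qsym; apply Qv't. apply Qsym; apply Qv''t. apply taus_one; eauto. auto.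
    - exists v1; split; auto. exists v'; repeat split; auto.
      eapply Qsand'. apply Qsym; apply Qvt. apply Qsym; apply Qv't. apply taus_one; eauto. auto. }
  assert (inh : inhabited (St L)) by (constructor; exact t).
  set (nx v := epsilon inh (fun v1 => trans L v (tau L) v1 /\ G' v1)).
  set (g := fix g n := match n with 0 => t | S n => nx (g n) end).
  assert (Hg : forall n, G' (g n)).
  { induction n.
    - simpl. exists t; repeat split; try apply taus_refl.
      + exists s; repeat split; auto. eapply Qrefl; apply Qsym; apply Qbase; eauto.
      + eapply Qrefl; apply Qsym; apply Qbase; eauto.
    - simpl. unfold nx. apply (epsilon_spec inh (fun v1 => trans L (g n) (tau L) v1 /\ G' v1)).
      apply HG'; auto. }
  exists g; repeat split; auto.
  - intros n. simpl. unfold nx. apply (epsilon_spec inh (fun v1 => trans L (g n) (tau L) v1 /\ G' v1)).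
    apply HG'; auto.
  - intros n. destruct (Hg n) as [? [? [? ?]]]; auto.
Qed.

Lemma InfC_Q s t : Q s t -> (InfC s <-> InfC t).
Proof.
  pose proof HR as [[Hs Htr] Hed].
  induction 1 as [s t H|s t H IH|s r t H1 IH1 H2 IH2|p z u z' H1 IH1 H2 IH2 H3 H4].
  - split; apply InfC_base; auto.
  - tauto.
  - tauto.
  - assert (Qpu : Q p u) by (apply (Qsand p z u z'); auto).
    split; intro Hi.
    + apply (InfC_prepend u z'); auto.
      * intros w Hw1 Hw2. apply (Qtr _ p); auto. apply Qsym.
        apply (Qsand p z w z'); auto. eapply taus_trans; eauto.
      * apply IH2; auto.
      * apply (Qtr _ p); auto. apply Qsym; auto.
    + apply IH1. apply (InfC_prepend z u); auto.
      * intros w Hw1 Hw2. apply (Qtr _ p); auto. apply Qsym.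
        apply (Qsand p z w z'); auto. eapply taus_trans; eauto.
      * apply (Qtr _ p); auto. apply Qsym; auto.
Qed.


Fixpoint tausn (n : nat) (a b : St L) : Prop :=
  match n with 0 => a = b | S n => exists c, trans L a (tau L) c /\ tausn n c b end.

Lemma tausn_taus n a b : tausn n a b -> taus L a b.
Proof.
  revert a; induction n; simpl; intros a H.
  - subst; constructor.
  - destruct H as [c [H1 H2]]; eapply taus_step; eauto.
Qed.

Lemma taus_tausn a b : taus L a b -> exists n, tausn n a b.
Proof.
  induction 1 as [s|s s' t H1 H2 [n IH]].
  - exists 0; reflexivity.
  - exists (S n); simpl; eauto.
Qed.

Definition DPlan (p w : St L) (a : Act L) (u' vb : St L) (f : tag) (n : nat) : Prop :=
  match f with
  | Frown => Q p w /\ (x = mb -> Q p vb) /\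
      exists n1 n2 v1 v2 v', tausn n1 vb v1 /\ trans L v1 a v2 /\ tausn n2 v2 v' /\
        cx p v1 /\ cy u' v2 /\ Q u' v' /\ n = n1 + n2
  | Smile => Q p w /\ (y = mb -> p = u' /\ Q u' vb) /\
      exists v', tausn (S n) vb v' /\ Q u' v'
  end.

Definition DPc (c : config L) (n : nat) : Prop :=
  match cpos c, cch c, cmem c with
  | (p, w), Some (a, u'), Some (vb, f) => DPlan p w a u' vb f n
  | _, _, _ => False
  end.

Definition R1c (c : config L) : Prop :=
  match cch c, cmem c with
  | Some (a, u'), Some (vb, f) => f = Frown /\ a = tau L /\ exists v1, trans L vb (tau L) v1 /\ Q u' v1
  | _, _ => False
  end.

Definition R2c (c : config L) : Prop :=
  match cch c, cmem c with
  | Some (a, u'), Some (vb, f) => f = Frown /\ a = tau L /\ Q u' vb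
  | _, _ => False
  end.

Definition Qpos (c : config L) := Q (fst (cpos c)) (snd (cpos c)).

Definition dagger_ok (c : config L) := cown c = Spoiler /\ cch c = None /\ cmem c = None /\ Qpos c.

Definition GoodS (c : config L) := dagger_ok c \/ (cown c = Spoiler /\ exists n, DPc c n).

Definition GoodD (c : config L) := cown c = Duplicator /\ (R2c c \/ exists n, DPc c n).

Definition E := Exy x y.

Definition mu (c : config L) : nat :=
  epsilon (inhabits 0) (fun n => DPc c n /\ forall m, DPc c m -> n <= m).

Definition GoodNext (c c' : config L) :=
  move L E c c' /\ ((dagger_ok c' /\ crew c' = true) \/
                    (cown c' = Spoiler /\ crew c' = false /\ exists m, DPc c' m /\ m < mu c)).

Definition strat (c : config L) : config L :=
  match cch c, cmem c with
  | Some (a, u'), Some (vb, f) =>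
     if excluded_middle_informative (R1c c) then
       mkCfg Spoiler (u', epsilon (inhabits u') (fun v1 => trans L vb (tau L) v1 /\ Q u' v1)) None None true
     else if excluded_middle_informative (R2c c) then mkCfg Spoiler (u', vb) None None false
     else epsilon (inhabits c) (GoodNext c)
  | _, _ => c
  end.

Lemma least_nat (P : nat -> Prop) : (exists n, P n) -> exists n, P n /\ forall m, P m -> n <= m.
Proof.
  intros [n Hn]. revert Hn. induction n as [n IH] using (well_founded_induction lt_wf). intros Hn.
  destruct (classic (exists m, m < n /\ P m)) as [[m [Hm1 Hm2]]|Hno].
  - apply (IH m); auto.
  - exists n; split; auto. intros m Hm. destruct (le_lt_dec n m); auto.
    exfalso; apply Hno; eauto.
Qed.

Lemma mu_spec c n : DPc c n -> DPc c (mu c) /\ forall m, DPc c m -> mu c <= m.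
Proof.
  intros H. unfold mu.
  apply (epsilon_spec (inhabits 0) (fun n => DPc c n /\ forall m, DPc c m -> n <= m)).
  apply least_nat; eauto.
Qed.

Lemma DPc_Q c n : DPc c n -> Qpos c.
Proof.
  destruct c as [o [p w] [[a u']|] [[vb f]|] r]; unfold DPc, Qpos; simpl; try tauto.
  destruct f; simpl; tauto.
Qed.

Lemma plan_step c n : DPc c n -> cown c = Duplicator ->
  exists c', move L E c c' /\ ((dagger_ok c' /\ crew c' = true) \/
     (cown c' = Spoiler /\ crew c' = false /\ exists m, DPc c' m /\ m < n)).
Proof.
  destruct c as [o [p w] [[a u']|] [[vb f]|] r]; unfold DPc; simpl; try tauto.
  intros H Ho; subst o.
  destruct f; simpl in H.
  - destruct H as [Qpw [Hxb [n1 [n2 [v1 [v2 [v' [H1 [H2 [H3 [Cx [Cy [Qv Hn]]]]]]]]]]]]].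
    destruct n1 as [|k].
    + simpl in H1; subst v1.
      destruct n2 as [|k].
      * simpl in H3; subst v2.
        exists (mkCfg Spoiler (u', v') None None true). split.
        -- apply mD2b; auto.
        -- left; repeat split; auto.
      * destruct (mode_cases y) as [Ey|Ey].
        -- exists (mkCfg Spoiler (p, w) (Some (a, u')) (Some (v2, Smile)) false). split.
           ++ apply mD2c; unfold E; simpl; auto.
           ++ right; repeat split; auto. exists k; split; [|lia].
              unfold DPc; simpl. split; [auto|split].
              intros E'; rewrite Ey in E'; discriminate.
              exists v'; split; auto.
        -- exists (mkCfg Spoiler (u', v2) (Some (a, u')) (Some (v2, Smile)) false). split.
           ++ apply mD2a; auto.
           ++ right; repeat split; auto. exists k; split; [|lia].
              unfold DPc; simpl. repeat split; auto.
              exists v'; split; auto.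
    + destruct H1 as [c [Hc1 Hc2]].
      destruct (mode_cases x) as [Ex|Ex].
      * exists (mkCfg Spoiler (p, w) (Some (a, u')) (Some (c, Frown)) false). split.
        -- apply mD3c; unfold E; simpl; auto.
        -- right; repeat split; auto. exists (k + n2); split; [|lia].
           unfold DPc; simpl. split; [auto|split].
           intros E'; rewrite Ex in E'; discriminate.
           exists k, n2, v1, v2, v'; repeat split; auto.
      * assert (Qpc : Q p c).
        { apply (Qsand p vb c v1); auto. apply taus_one; auto. eapply tausn_taus; eauto. }
        exists (mkCfg Spoiler (p, c) (Some (a, u')) (Some (c, Frown)) false). split.
        -- apply mD3a; auto.
        -- right; repeat split; auto. exists (k + n2); split; [|lia].
           unfold DPc; simpl. repeat split; auto.
           exists k, n2, v1, v2, v'; repeat split; auto.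
  - destruct H as [Qpw [Hyb [v' [[c [Hc1 Hc2]] Qv]]]].
    destruct n as [|k].
    + simpl in Hc2; subst c.
      exists (mkCfg Spoiler (u', v') None None true). split.
      * apply mD3b; auto.
      * left; repeat split; auto.
    + destruct (mode_cases y) as [Ey|Ey].
      * exists (mkCfg Spoiler (p, w) (Some (a, u')) (Some (c, Smile)) false). split.
        -- apply mD3c; unfold E; simpl; auto.
        -- right; repeat split; auto. exists k; split; [|lia].
           unfold DPc; simpl. split; [auto|split].
           intros E'; rewrite Ey in E'; discriminate.
           exists v'; split; auto.
      * destruct (Hyb Ey) as [<- Qvb].
        assert (Qpc : Q p c).
        { apply (Qsand p vb c v'); auto. apply taus_one; auto. eapply tausn_taus; eauto. }
        exists (mkCfg Spoiler (p, c) (Some (a, p)) (Some (c, Smile)) false). split.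
        -- apply mD3a; auto.
        -- right; repeat split; auto. exists k; split; [|lia].
           unfold DPc; simpl. repeat split; auto.
           exists v'; split; auto.
Qed.

Lemma fresh_good p w a p' r : Q p w -> trans L p a p' ->
  GoodD (mkCfg Duplicator (p, w) (Some (a, p')) (Some (w, Frown)) r).
Proof.
  intros HQ Ha. split; [reflexivity|].
  destruct (Q_GA p w a p' HQ Ha) as [[Hat Hq]|[v1 [v2 [v' [H1 [H2 [H3 [Cx [Cy Qv]]]]]]]]].
  - left. unfold R2c; simpl; auto.
  - right. destruct (taus_tausn _ _ H1) as [n1 Hn1]. destruct (taus_tausn _ _ H3) as [n2 Hn2].
    exists (n1 + n2). unfold DPc; simpl. split; [auto|split]; auto.
    exists n1, n2, v1, v2, v'; repeat split; auto.
Qed.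

Lemma DPc_some c m : DPc c m -> exists a u' vb f, cch c = Some (a, u') /\ cmem c = Some (vb, f).
Proof.
  destruct c as [o [p w] [[a u']|] [[vb f]|] r]; unfold DPc; simpl; try tauto.
  intros _; do 4 eexists; split; reflexivity.
Qed.

Lemma S_to_D c c' : GoodS c -> move L E c c' -> GoodD c'.
Proof.
  intros HG Hm.
  assert (HQ : Qpos c) by (destruct HG as [[? [? [? ?]]]|[? [n Hn]]]; [auto|eapply DPc_Q; eauto]).
  assert (Ho : cown c = Spoiler) by (destruct HG as [[? ?]|[? ?]]; auto).
  inversion Hm; subst; simpl in Ho; try discriminate; unfold Qpos in HQ; simpl in HQ.
  - destruct HG as [[_ [Hc _]]|[_ [n Hn]]].
    + simpl in Hc; congruence.
    + split; [reflexivity|]. right; exists n. exact Hn.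
  - apply fresh_good; auto.
  - apply fresh_good; auto.
  - apply fresh_good; auto. apply Qsym; auto.
Qed.

Lemma strat_R3 c : GoodD c -> ~ R1c c -> ~ R2c c -> GoodNext c (strat c).
Proof.
  intros [Ho [H2|[n Hn]]] N1 N2; [tauto|].
  destruct (DPc_some _ _ Hn) as [a [u' [vb [f [Hc Hmm]]]]].
  unfold strat. rewrite Hc, Hmm.
  destruct (excluded_middle_informative (R1c c)); [tauto|].
  destruct (excluded_middle_informative (R2c c)); [tauto|].
  apply (epsilon_spec (inhabits c) (GoodNext c)).
  destruct (mu_spec c n Hn) as [Hmu _].
  destruct (plan_step c (mu c) Hmu Ho) as [c' [Hm Hc']].
  exists c'; split; auto.
Qed.

Lemma strat_R1 c : cown c = Duplicator -> R1c c -> move L E c (strat c) /\ dagger_ok (strat c) /\ crew (strat c) = true.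
Proof.
  destruct c as [o [p w] [[a u']|] [[vb f]|] r]; unfold R1c; simpl; try tauto.
  intros Ho H1. subst o. unfold strat; simpl.
  destruct (excluded_middle_informative _) as [_|Hn]; [|exfalso; apply Hn; exact H1].
  destruct H1 as [-> [-> Hex]].
  pose proof (epsilon_spec (inhabits u') (fun v1 => trans L vb (tau L) v1 /\ Q u' v1) Hex) as [Ht Hq].
  repeat split; auto. apply mD2b; auto.
Qed.

Lemma strat_R2 c : cown c = Duplicator -> ~ R1c c -> R2c c ->
  exists u' vb, move L E c (strat c) /\ strat c = mkCfg Spoiler (u', vb) None None false /\
    Q u' vb /\ cch c = Some (tau L, u') /\ cmem c = Some (vb, Frown).
Proof.
  destruct c as [o [p w] [[a u']|] [[vb f]|] r]; unfold R2c; simpl; try tauto.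
  intros Ho N1 H2. subst o. unfold strat; simpl.
  destruct (excluded_middle_informative _) as [Hy|_]; [exfalso; apply N1; exact Hy|].
  destruct (excluded_middle_informative _) as [_|Hn]; [|exfalso; apply Hn; exact H2].
  destruct H2 as [-> [-> Hq]].
  exists u', vb; repeat split; auto. apply mD1; auto.
Qed.

Lemma D_to_S c : GoodD c -> move L E c (strat c) /\ GoodS (strat c).
Proof.
  intros HG.
  destruct (classic (R1c c)) as [H1|N1].
  - destruct (strat_R1 c (proj1 HG) H1) as [? [? ?]]; split; auto; left; auto.
  - destruct (classic (R2c c)) as [H2|N2].
    + destruct (strat_R2 c (proj1 HG) N1 H2) as [u' [vb [Hm [He [Hq _]]]]].
      split; auto. left. rewrite He; repeat split; auto.
    + destruct (strat_R3 c HG N1 N2) as [Hm [[Hd _]|[Ho [_ [m [Hm' _]]]]]].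
      * split; auto; left; auto.
      * split; auto; right; split; eauto.
Qed.

Lemma spoiler_nonck c c' : move L E c c' -> cown c = Spoiler -> crew c' = false ->
  (c' = mkCfg Duplicator (cpos c) (cch c) (cmem c) false /\ cch c <> None) \/
  (cch c = None /\ exists a s', trans L (fst (cpos c)) a s' /\
      c' = mkCfg Duplicator (cpos c) (Some (a, s')) (Some (snd (cpos c), Frown)) false).
Proof.
  intros Hm Ho Hr. inversion Hm; subst; simpl in *; try discriminate.
  - left; auto.
  - right; split; auto. eauto.
Qed.

Lemma dup_frown c c' a u' vb' : move L E c c' -> cown c = Duplicator ->
  cch c' = Some (a, u') -> cmem c' = Some (vb', Frown) ->
  exists vb, cch c = Some (a, u') /\ cmem c = Some (vb, Frown) /\ trans L vb (tau L) vb'.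
Proof.
  intros Hm Ho H1 H2. inversion Hm; subst; simpl in *; try discriminate;
  injection H1; injection H2; intros; subst; eauto.
Qed.

Lemma DPc_D c m : DPc c m -> DPc (mkCfg Duplicator (cpos c) (cch c) (cmem c) false) m.
Proof. destruct c; exact (fun h => h). Qed.

Lemma last_hist (p : nat -> config L) n d : last (history L p n) d = p n.
Proof.
  unfold history. rewrite seq_S, map_app. simpl. apply last_last.
Qed.

Theorem main_game s t : R s t -> game_equiv L E s t.
Proof.
  intros Hst.
  set (c0 := mkCfg Spoiler (s, t) None None false : config L).
  set (sigma := fun h : list (config L) => strat (last h c0)).
  assert (Hsig : forall p n, sigma (history L p n) = strat (p n)).
  { intros; unfold sigma; rewrite last_hist; auto. }
  assert (Hinv : forall p n, consistent_prefix L E sigma c0 p n -> forall i, i <= n -> GoodS (p i) \/ GoodD (p i)).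
  { intros p n [H0 Hc] i. induction i; intros Hi.
    - left; left. rewrite H0. repeat split; simpl; auto. unfold Qpos; simpl. apply Qbase; auto.
    - destruct (Hc i ltac:(lia)) as [Hm Hd].
      destruct (IHi ltac:(lia)) as [HS|HD].
      + right. eapply S_to_D; eauto.
      + left. rewrite (Hd (proj1 HD)), Hsig. apply D_to_S; auto. }
  exists sigma. split.
  - intros p n Hc Ho. rewrite Hsig.
    destruct (Hinv p n Hc n (le_n _)) as [[[Ho' _]|[Ho' _]]|HD]; try congruence.
    apply D_to_S; auto.
  - intros p Hall N.
    assert (Good : forall k, GoodS (p k) \/ GoodD (p k)) by (intros k; eapply Hinv; eauto).
    assert (Mv : forall k, move L E (p k) (p (S k))) by (intros k; apply (proj2 (Hall (S k)) k); lia).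
    assert (Dk : forall k, cown (p k) = Duplicator -> p (S k) = strat (p k)).
    { intros k Ho. rewrite <- Hsig. apply (proj2 (Hall (S k)) k); auto. }
    apply NNPP; intros Hno.
    assert (Hf : forall k, N <= k -> crew (p k) = false).
    { intros k Hk. destruct (crew (p k)) eqn:E'; auto. exfalso; apply Hno; eauto. }
    assert (GD : forall k, cown (p k) = Duplicator -> GoodD (p k)).
    { intros k Ho. destruct (Good k) as [[[Ho' _]|[Ho' _]]|HD]; auto; congruence. }
    assert (StepA : forall n k, N <= k -> GoodD (p k) -> ~ R1c (p k) -> ~ R2c (p k) -> mu (p k) <= n -> False).
    { induction n as [n IH] using (well_founded_induction lt_wf).
      intros k Hk HD N1 N2 Hmu.
      pose proof (strat_R3 _ HD N1 N2) as [Hm Hc'].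
      rewrite <- (Dk k (proj1 HD)) in Hm, Hc'.
      destruct Hc' as [[_ Hck]|[Ho1 [_ [m [Hm1 Hm2]]]]].
      { rewrite Hf in Hck; [discriminate|lia]. }
      destruct (spoiler_nonck _ _ (Mv (S k)) Ho1 (Hf (S (S k)) ltac:(lia))) as [[Heq Hne]|[Hn _]].
      2:{ destruct (DPc_some _ _ Hm1) as [? [? [? [? [Hc _]]]]]; congruence. }
      assert (Hm3 : DPc (p (S (S k))) m) by (rewrite Heq; apply DPc_D; auto).
      assert (HD2 : GoodD (p (S (S k)))) by (split; [rewrite Heq; reflexivity|right; eauto]).
      destruct (classic (R1c (p (S (S k))))) as [R1'|N1'].
      { destruct (strat_R1 _ (proj1 HD2) R1') as [_ [_ Hck]].
        rewrite <- (Dk _ (proj1 HD2)) in Hck. rewrite Hf in Hck; [discriminate|lia]. }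
      destruct (classic (R2c (p (S (S k))))) as [R2'|N2'].
      { exfalso. apply N1.
        destruct (DPc_some _ _ Hm1) as [a [u' [vb' [f [Hc Hmm]]]]].
        assert (Hc2 : cch (p (S (S k))) = Some (a, u')) by (rewrite Heq; auto).
        assert (Hm2' : cmem (p (S (S k))) = Some (vb', f)) by (rewrite Heq; auto).
        unfold R2c in R2'. rewrite Hc2, Hm2' in R2'. destruct R2' as [-> [-> Hq]].
        destruct (dup_frown _ _ _ _ _ Hm (proj1 HD) Hc Hmm) as [vb [Hc0 [Hm0 Ht]]].
        unfold R1c; rewrite Hc0, Hm0. repeat split; eauto. }
      destruct (mu_spec _ _ Hm3) as [_ Hmin].
      apply (IH (mu (p (S (S k))))) with (k := S (S k)); auto; try lia.
      specialize (Hmin m Hm3); lia. }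
    assert (StepB : forall k, N <= k -> cown (p k) = Duplicator -> R2c (p k) /\ ~ R1c (p k)).
    { intros k Hk Ho. pose proof (GD k Ho) as HD.
      destruct (classic (R1c (p k))) as [R1'|N1'].
      { destruct (strat_R1 _ Ho R1') as [_ [_ Hck]].
        rewrite <- (Dk _ Ho) in Hck. rewrite Hf in Hck; [discriminate|lia]. }
      destruct (classic (R2c (p k))) as [R2'|N2']; auto.
      exfalso; eapply (StepA (mu (p k)) k); eauto. }
    assert (C3 : forall k u v, N <= k -> p k = mkCfg Spoiler (u, v) None None false ->
       exists u1, trans L u (tau L) u1 /\ Q u1 v /\ (~ exists v1, trans L v (tau L) v1 /\ Q u1 v1) /\
         p (S (S k)) = mkCfg Spoiler (u1, v) None None false).
    { intros k u v Hk Hpk.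
      assert (Ho : cown (p k) = Spoiler) by (rewrite Hpk; auto).
      destruct (spoiler_nonck _ _ (Mv k) Ho (Hf (S k) ltac:(lia))) as [[_ Hne]|[_ [a [u1 [Ht Heq]]]]].
      { rewrite Hpk in Hne; simpl in Hne; congruence. }
      rewrite Hpk in Ht, Heq; simpl in Ht, Heq.
      assert (Ho1 : cown (p (S k)) = Duplicator) by (rewrite Heq; auto).
      destruct (StepB (S k) ltac:(lia) Ho1) as [R2' N1'].
      destruct (strat_R2 _ Ho1 N1' R2') as [u' [vb [_ [He [Hq [Hc Hmm]]]]]].
      rewrite Heq in Hc, Hmm; simpl in Hc, Hmm. injection Hc; injection Hmm; intros; subst.
      exists u'; repeat split; auto.
      - intros [v1 [Hv1 Hq1]]. apply N1'. rewrite Heq. unfold R1c; simpl. eauto.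
      - rewrite (Dk _ Ho1), He. reflexivity. }
    assert (HK : exists K, N <= K /\ cown (p K) = Duplicator).
    { destruct (Good N) as [HS|HD].
      - exists (S N); split; [lia|]. apply (S_to_D _ _ HS (Mv N)).
      - exists N; split; auto; apply HD. }
    destruct HK as [K [HK HoK]].
    destruct (StepB K HK HoK) as [R2' N1'].
    destruct (strat_R2 _ HoK N1' R2') as [u0 [t0 [_ [He [Hq0 _]]]]].
    rewrite <- (Dk _ HoK) in He.
    set (g := fun i => fst (cpos (p (S K + 2 * i)))).
    assert (Hg : forall i, p (S K + 2 * i) = mkCfg Spoiler (g i, t0) None None false).
    { induction i.
      - unfold g. replace (S K + 2 * 0) with (S K) by lia. rewrite He; reflexivity.
      - destruct (C3 (S K + 2 * i) _ _ ltac:(lia) IHi) as [u1 [_ [_ [_ Hp2]]]].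
        unfold g. replace (S K + 2 * S i) with (S (S (S K + 2 * i))) by lia.
        rewrite Hp2; reflexivity. }
    assert (Hstep : forall i, trans L (g i) (tau L) (g (S i)) /\ Q (g (S i)) t0 /\
                      ~ exists v1, trans L t0 (tau L) v1 /\ Q (g (S i)) v1).
    { intros i. destruct (C3 (S K + 2 * i) _ _ ltac:(lia) (Hg i)) as [u1 [Ht [Hq [Hn Hp2]]]].
      replace (S (S (S K + 2 * i))) with (S K + 2 * S i) in Hp2 by lia.
      rewrite Hg in Hp2. injection Hp2; intros; subst. auto. }
    assert (Hg0 : g 0 = u0).
    { unfold g. replace (S K + 2 * 0) with (S K) by lia. rewrite He; reflexivity. }
    assert (HQg : forall i, Q (g i) t0).
    { intros [|i]. rewrite Hg0; auto. apply Hstep. }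
    assert (Hinf : InfC (g 0)).
    { exists g; repeat split; auto.
      - intros i; apply Hstep.
      - intros i. apply (Qtr _ t0); auto. apply Qsym; auto. }
    apply (proj1 (InfC_Q _ _ (HQg 0))) in Hinf.
    destruct Hinf as [f [Hf0 [Hf1 Hf2]]].
    destruct (Hstep 0) as [_ [_ Hn]]. apply Hn.
    exists (f 1). split.
    + rewrite <- Hf0; apply Hf1.
    + apply (Qtr _ t0); auto. apply Qsym; auto.
Qed.

End Q.

Theorem lemma6p7 (L : LTS) (x y : mode) (s t : St L) :
  bisim_ed L x y s t -> game_equiv L (Exy x y) s t.
Proof.
  intros [R [HR Hst]]. exact (main_game L x y R HR s t Hst).
Qed.
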